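(* A marker-per-face strategy with point-plane data does not uniquely determine a scene consisting of several convex polyhedra: there exist two distinct finite sets $S\neq S'$ of pairwise disjoint convex polyhedra in $\mathbb{R}^3$ and a finite set $M$ of point-plane markers that is a marker-per-face markup of both $S$ and $S'$. Moreover, the same holds with point-normal markers in place of point-plane markers.
   Context: A polyhedron is a closed, connected, three-dimensional region of $\mathbb{R}^3$ whose boundary consists of finitely many polygons (faces) such that every edge of every face is shared with exactly one other face, two faces intersect only in shared edges or vertices, and faces sharing a vertex can be cyclically ordered so that consecutive ones share an edge; faces are taken maximal (closures of connected components of the locally planar part of the boundary). A point-plane marker is a pair $(p,R)$ with $R$ a plane and $p\in R$; a finite set $M$ of such markers is a marker-per-face markup of a finite set $S$ of polyhedra if each $(p,R)\in M$ has $p$ on some face $F$ of some polyhedron in $S$ with $R$ the plane of $F$, and every face $F$ of every polyhedron in $S$ contains the point of some marker whose plane is the plane of $F$. A point-normal marker is a pair $(p,n)$ with $n$ a unit vector; the markup condition is the same with ''the plane of $F$'' replaced by ''the outward unit normal on $F$''. *)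

(* Defs.v *)
From Stdlib Require Import Reals List.
Import ListNotations.
Open Scope R_scope.

Definition R3 : Type := (R * R * R)%type.
Definition region := R3 -> Prop.

Definition dot (u v : R3) : R :=
  let '(u1, u2, u3) := u in let '(v1, v2, v3) := v in u1*v1 + u2*v2 + u3*v3.
Definition vsub (u v : R3) : R3 :=
  let '(u1, u2, u3) := u in let '(v1, v2, v3) := v in (u1-v1, u2-v2, u3-v3).
Definition cross (u v : R3) : R3 :=
  let '(u1, u2, u3) := u in let '(v1, v2, v3) := v in
  (u2*v3 - u3*v2, u3*v1 - u1*v3, u1*v2 - u2*v1).
Definition vzero : R3 := (0, 0, 0).
Definition norm2 (u : R3) : R := dot u u.

Definition set_eq (A B : region) : Prop := forall x, A x <-> B x.

Definition is_plane (H : region) : Prop :=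
  exists (n : R3) (c : R), n <> vzero /\ forall x, H x <-> dot n x = c.

Definition ball (a : R3) (r : R) : region := fun x => norm2 (vsub x a) < r * r.

Definition convex_polyhedron (P : region) : Prop :=
  exists hs : list (R3 * R),
    (forall x, P x <-> forall h, In h hs -> dot (fst h) x <= snd h) /\
    (exists B, forall x, P x -> norm2 x <= B) /\
    (exists a r, 0 < r /\ forall x, ball a r x -> P x).

(* F is a (maximal, 2-dimensional) face of the convex polyhedron P *)
Definition is_face (P F : region) : Prop :=
  exists (n : R3) (c : R), n <> vzero /\
    (forall x, P x -> dot n x <= c) /\
    (forall x, F x <-> (P x /\ dot n x = c)) /\
    exists a b d, F a /\ F b /\ F d /\ cross (vsub b a) (vsub d a) <> vzero.

Definition plane_of_face (F H : region) : Prop :=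
  is_plane H /\ forall x, F x -> H x.

Definition outward_unit_normal (P F : region) (n : R3) : Prop :=
  norm2 n = 1 /\ exists c, (forall x, P x -> dot n x <= c) /\
                           (forall x, F x -> dot n x = c).

Definition pp_marker := (R3 * region)%type.
Definition pn_marker := (R3 * R3)%type.

Definition pp_markup (M : list pp_marker) (S : list region) : Prop :=
  (forall m, In m M -> exists P F, In P S /\ is_face P F /\ F (fst m) /\
                                   plane_of_face F (snd m)) /\
  (forall P F, In P S -> is_face P F ->
     exists m, In m M /\ F (fst m) /\ plane_of_face F (snd m)).

Definition pn_markup (M : list pn_marker) (S : list region) : Prop :=
  (forall m, In m M -> exists P F, In P S /\ is_face P F /\ F (fst m) /\
                                   outward_unit_normal P F (snd m)) /\
  (forall P F, In P S -> is_face P F ->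
     exists m, In m M /\ F (fst m) /\ outward_unit_normal P F (snd m)).

Definition valid_scene (S : list region) : Prop :=
  (forall P, In P S -> convex_polyhedron P) /\
  (forall i j, (i < length S)%nat -> (j < length S)%nat -> i <> j ->
     forall x, ~ (nth i S (fun _ => False) x /\ nth j S (fun _ => False) x)).

Definition mem_scene (P : region) (S : list region) : Prop :=
  exists Q, In Q S /\ set_eq P Q.

Definition scenes_differ (S S' : list region) : Prop :=
  (exists P, In P S /\ ~ mem_scene P S') \/ (exists P, In P S' /\ ~ mem_scene P S).

(* Main.v *)
Require Import Defs.
From Stdlib Require Import Reals List Lra Lia.
Import ListNotations.
Open Scope R_scope.

Definition coord (i : nat) (x : R3) : R :=
  match x with (x1, x2, x3) => match i with O => x1 | S O => x2 | _ => x3 end end.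
Definition box (lo hi : R3) : region :=
  fun x => forall i, (i < 3)%nat -> coord i lo <= coord i x <= coord i hi.
Definition bnd (lo hi : R3) (i : nat) (s : bool) : R := coord i (if s then hi else lo).
Definition facet (lo hi : R3) (i : nat) (s : bool) : region :=
  fun x => box lo hi x /\ coord i x = bnd lo hi i s.
Definition sgn (s : bool) : R := if s then 1 else -1.
Definition nvec (i : nat) (s : bool) : R3 :=
  match i with O => (sgn s, 0, 0) | S O => (0, sgn s, 0) | _ => (0, 0, sgn s) end.
Definition hplane (i : nat) (v : R) : region := fun x => coord i x = v.
Definition upd (i : nat) (x : R3) (v : R) : R3 :=
  match x with (x1, x2, x3) =>
    match i with O => (v, x2, x3) | S O => (x1, v, x3) | _ => (x1, x2, v) end end.

Ltac icases i := destruct i as [|[|[|i]]]; try lia.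

Lemma coord_upd_same i x v : (i < 3)%nat -> coord i (upd i x v) = v.
Proof. intros; destruct x as [[x1 x2] x3]; icases i; reflexivity. Qed.

Lemma coord_upd_other i j x v : (i < 3)%nat -> (j < 3)%nat -> j <> i ->
  coord j (upd i x v) = coord j x.
Proof. intros; destruct x as [[x1 x2] x3]; icases i; icases j; reflexivity. Qed.

Lemma dot_upd i n x v : (i < 3)%nat ->
  dot n (upd i x v) = dot n x + coord i n * (v - coord i x).
Proof. intros; destruct x as [[x1 x2] x3]; destruct n as [[n1 n2] n3]; icases i; simpl; ring. Qed.

Lemma coord_vsub i u w : (i < 3)%nat -> coord i (vsub u w) = coord i u - coord i w.
Proof. intros; destruct u as [[u1 u2] u3]; destruct w as [[w1 w2] w3]; icases i; reflexivity. Qed.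

Lemma dot_nvec i s x : (i < 3)%nat -> dot (nvec i s) x = sgn s * coord i x.
Proof. intros; destruct x as [[x1 x2] x3]; icases i; simpl; ring. Qed.

Lemma norm_nvec i s : (i < 3)%nat -> norm2 (nvec i s) = 1.
Proof. intros; unfold norm2; icases i; destruct s; simpl; ring. Qed.

Lemma box_upd lo hi x i v : (i < 3)%nat -> box lo hi x ->
  coord i lo <= v <= coord i hi -> box lo hi (upd i x v).
Proof.
  intros Hi Hb Hv j Hj. destruct (Nat.eq_dec j i) as [->|Hne].
  - rewrite coord_upd_same; auto.
  - rewrite coord_upd_other; auto.
Qed.

Lemma cross_zero2 i j u w : (i < 3)%nat -> (j < 3)%nat -> i <> j ->
  coord i u = 0 -> coord i w = 0 -> coord j u = 0 -> coord j w = 0 -> cross u w = vzero.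
Proof.
  intros; destruct u as [[u1 u2] u3]; destruct w as [[w1 w2] w3].
  icases i; icases j; simpl in *; subst; unfold vzero; f_equal; try f_equal; ring.
Qed.

Lemma dot_single n x i : (i < 3)%nat ->
  (forall j, (j < 3)%nat -> j <> i -> coord j n = 0) -> dot n x = coord i n * coord i x.
Proof.
  intros Hi H; destruct x as [[x1 x2] x3]; destruct n as [[n1 n2] n3].
  pose proof (H 0%nat) as H0; pose proof (H 1%nat) as H1; pose proof (H 2%nat) as H2.
  icases i; simpl in *.
  - rewrite H1, H2 by lia; ring.
  - rewrite H0, H2 by lia; ring.
  - rewrite H0, H1 by lia; ring.
Qed.

Definition good_box (lo hi : R3) := forall i, (i < 3)%nat -> coord i lo < coord i hi.

Section Face.
Variables (lo hi : R3) (F : region) (n : R3) (c : R).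
Hypothesis Hgood : good_box lo hi.
Hypothesis Hsup : forall x, box lo hi x -> dot n x <= c.
Hypothesis HF : forall x, F x <-> (box lo hi x /\ dot n x = c).

Lemma fixpos i x : (i < 3)%nat -> F x -> 0 < coord i n -> coord i x = coord i hi.
Proof.
  intros Hi Fx Hn. apply HF in Fx as [Bx Ex].
  pose proof (Bx i Hi) as Bi.
  assert (Bv : box lo hi (upd i x (coord i hi))) by (apply box_upd; auto; pose proof (Hgood i Hi); lra).
  pose proof (Hsup _ Bv) as Hv. rewrite dot_upd in Hv by auto.
  destruct (Req_dec (coord i x) (coord i hi)) as [e|ne]; auto.
  assert (0 < coord i n * (coord i hi - coord i x)) by (apply Rmult_lt_0_compat; lra). lra.
Qed.

Lemma fixneg i x : (i < 3)%nat -> F x -> coord i n < 0 -> coord i x = coord i lo.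
Proof.
  intros Hi Fx Hn. apply HF in Fx as [Bx Ex].
  pose proof (Bx i Hi) as Bi.
  assert (Bv : box lo hi (upd i x (coord i lo))) by (apply box_upd; auto; pose proof (Hgood i Hi); lra).
  pose proof (Hsup _ Bv) as Hv. rewrite dot_upd in Hv by auto.
  destruct (Req_dec (coord i x) (coord i lo)) as [e|ne]; auto.
  assert (0 < (- coord i n) * (coord i x - coord i lo)) by (apply Rmult_lt_0_compat; lra). lra.
Qed.

Lemma fixnz i x y : (i < 3)%nat -> F x -> F y -> coord i n <> 0 -> coord i x = coord i y.
Proof.
  intros Hi Fx Fy Hn. destruct (Rtotal_order (coord i n) 0) as [H|[H|H]].
  - rewrite (fixneg i x), (fixneg i y); auto.
  - contradiction.
  - rewrite (fixpos i x), (fixpos i y); auto.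
Qed.

Lemma two_nz i j a b d : (i < 3)%nat -> (j < 3)%nat -> i <> j ->
  coord i n <> 0 -> coord j n <> 0 -> F a -> F b -> F d ->
  cross (vsub b a) (vsub d a) = vzero.
Proof.
  intros. apply (cross_zero2 i j); auto; rewrite coord_vsub by auto;
  match goal with |- coord ?k ?p - coord ?k ?q = 0 => rewrite (fixnz k p q); auto; ring end.
Qed.

Lemma one_nz i a : (i < 3)%nat -> coord i n <> 0 ->
  (forall j, (j < 3)%nat -> j <> i -> coord j n = 0) -> F a ->
  exists s, forall x, F x <-> facet lo hi i s x.
Proof.
  intros Hi Hn Hz Fa.
  assert (Ha := Fa). apply HF in Ha as [Ba Ea]. rewrite (dot_single n a i Hi Hz) in Ea.
  destruct (Rtotal_order (coord i n) 0) as [H|[H|H]]; [exists false | contradiction | exists true];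
  intro x; unfold facet, bnd; split.
  - intro Fx; split; [apply HF in Fx; tauto | apply fixneg; auto].
  - intros [Bx Ex]; apply HF; split; auto. rewrite (dot_single n x i Hi Hz), Ex, <- Ea.
    rewrite (fixneg i a); auto.
  - intro Fx; split; [apply HF in Fx; tauto | apply fixpos; auto].
  - intros [Bx Ex]; apply HF; split; auto. rewrite (dot_single n x i Hi Hz), Ex, <- Ea.
    rewrite (fixpos i a); auto.
Qed.
End Face.

Lemma classify lo hi F : good_box lo hi -> is_face (box lo hi) F ->
  exists i s, (i < 3)%nat /\ forall x, F x <-> facet lo hi i s x.
Proof.
  intros Hg [n [c [Hn [Hsup [HF [a [b [d [Fa [Fb [Fd Hcr]]]]]]]]]]].
  destruct (Req_dec (coord 0 n) 0) as [z0|z0];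
  destruct (Req_dec (coord 1 n) 0) as [z1|z1];
  destruct (Req_dec (coord 2 n) 0) as [z2|z2];
  try (exfalso; apply Hcr; eapply two_nz with (i := 0%nat) (j := 1%nat); eauto; lia);
  try (exfalso; apply Hcr; eapply two_nz with (i := 0%nat) (j := 2%nat); eauto; lia);
  try (exfalso; apply Hcr; eapply two_nz with (i := 1%nat) (j := 2%nat); eauto; lia).
  - exfalso; apply Hn; destruct n as [[n1 n2] n3]; simpl in *; subst; reflexivity.
  - destruct (one_nz lo hi F n c Hg Hsup HF 2 a) as [s Hs]; auto.
    intros j Hj Hne; icases j; auto; lia.
    exists 2%nat, s; auto.
  - destruct (one_nz lo hi F n c Hg Hsup HF 1 a) as [s Hs]; auto.
    intros j Hj Hne; icases j; auto; lia.
    exists 1%nat, s; auto.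
  - destruct (one_nz lo hi F n c Hg Hsup HF 0 a) as [s Hs]; auto.
    intros j Hj Hne; icases j; auto; lia.
    exists 0%nat, s; auto.
Qed.

Lemma sup_facet lo hi i s x : (i < 3)%nat -> box lo hi x -> dot (nvec i s) x <= sgn s * bnd lo hi i s.
Proof. intros Hi Hb; rewrite dot_nvec by auto; pose proof (Hb i Hi); unfold bnd, sgn; destruct s; lra. Qed.

Lemma facet_is_face lo hi i s : good_box lo hi -> (i < 3)%nat -> is_face (box lo hi) (facet lo hi i s).
Proof.
  intros Hg Hi. exists (nvec i s), (sgn s * bnd lo hi i s). split; [|split; [|split]].
  - intro H; assert (norm2 (nvec i s) = 0) by (rewrite H; unfold norm2, vzero; simpl; ring).
    rewrite norm_nvec in H0 by auto; lra.
  - intros; apply sup_facet; auto.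
  - intro x; unfold facet; rewrite dot_nvec by auto; unfold sgn; destruct s; split;
      intros [A B]; split; auto; lra.
  - pose proof (Hg 0%nat ltac:(lia)) as g0; pose proof (Hg 1%nat ltac:(lia)) as g1;
    pose proof (Hg 2%nat ltac:(lia)) as g2.
    destruct lo as [[l1 l2] l3]; destruct hi as [[h1 h2] h3]; simpl in g0, g1, g2.
    unfold facet, box, bnd.
    icases i; destruct s; simpl.
    + exists (h1,l2,l3), (h1,h2,l3), (h1,l2,h3).
      repeat match goal with |- forall k : nat, _ => let k := fresh in let Hk := fresh in intros k Hk; icases k; simpl; lra | |- _ /\ _ => split | |- _ = _ => reflexivity end.
      unfold vzero; intro H; injection H; intros; nra.
    + exists (l1,l2,l3), (l1,h2,l3), (l1,l2,h3).
      repeat match goal with |- forall k : nat, _ => let k := fresh in let Hk := fresh in intros k Hk; icases k; simpl; lra | |- _ /\ _ => split | |- _ = _ => reflexivity end.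
      unfold vzero; intro H; injection H; intros; nra.
    + exists (l1,h2,l3), (h1,h2,l3), (l1,h2,h3).
      repeat match goal with |- forall k : nat, _ => let k := fresh in let Hk := fresh in intros k Hk; icases k; simpl; lra | |- _ /\ _ => split | |- _ = _ => reflexivity end.
      unfold vzero; intro H; injection H; intros; nra.
    + exists (l1,l2,l3), (h1,l2,l3), (l1,l2,h3).
      repeat match goal with |- forall k : nat, _ => let k := fresh in let Hk := fresh in intros k Hk; icases k; simpl; lra | |- _ /\ _ => split | |- _ = _ => reflexivity end.
      unfold vzero; intro H; injection H; intros; nra.
    + exists (l1,l2,h3), (h1,l2,h3), (l1,h2,h3).
      repeat match goal with |- forall k : nat, _ => let k := fresh in let Hk := fresh in intros k Hk; icases k; simpl; lra | |- _ /\ _ => split | |- _ = _ => reflexivity end.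
      unfold vzero; intro H; injection H; intros; nra.
    + exists (l1,l2,l3), (h1,l2,l3), (l1,h2,l3).
      repeat match goal with |- forall k : nat, _ => let k := fresh in let Hk := fresh in intros k Hk; icases k; simpl; lra | |- _ /\ _ => split | |- _ = _ => reflexivity end.
      unfold vzero; intro H; injection H; intros; nra.
Qed.

Lemma outward lo hi F i s : (i < 3)%nat -> (forall x, F x <-> facet lo hi i s x) ->
  outward_unit_normal (box lo hi) F (nvec i s).
Proof.
  intros Hi HF. split; [apply norm_nvec; auto|]. exists (sgn s * bnd lo hi i s); split.
  - intros; apply sup_facet; auto.
  - intros x Fx; apply HF in Fx as [_ E]; rewrite dot_nvec by auto; rewrite E; reflexivity.
Qed.

Lemma plane_lem lo hi F i s v : (i < 3)%nat -> (forall x, F x <-> facet lo hi i s x) ->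
  v = bnd lo hi i s -> plane_of_face F (hplane i v).
Proof.
  intros Hi HF Hv. split.
  - exists (nvec i true), v; split.
    + intro H; assert (norm2 (nvec i true) = 0) by (rewrite H; unfold norm2, vzero; simpl; ring).
      rewrite norm_nvec in H0 by auto; lra.
    + intro x; unfold hplane; rewrite dot_nvec by auto; unfold sgn; split; intro; lra.
  - intros x Fx; apply HF in Fx as [_ E]; unfold hplane; rewrite E, Hv; reflexivity.
Qed.

Lemma box_convex l1 l2 l3 h1 h2 h3 : l1 + 1 <= h1 -> l2 + 1 <= h2 -> l3 + 1 <= h3 ->
  convex_polyhedron (box (l1,l2,l3) (h1,h2,h3)).
Proof.
  intros g1 g2 g3.
  exists [((-1,0,0), -l1); ((1,0,0),h1); ((0,-1,0),-l2); ((0,1,0),h2); ((0,0,-1),-l3); ((0,0,1),h3)].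
  split; [|split].
  - intros [[x1 x2] x3]; unfold box; split.
    + intros Hb h Hin. pose proof (Hb 0%nat ltac:(lia)); pose proof (Hb 1%nat ltac:(lia));
      pose proof (Hb 2%nat ltac:(lia)); simpl in *.
      repeat (destruct Hin as [<-|Hin]; [simpl; lra|]); contradiction.
    + intros H k Hk. pose proof (H _ (or_introl eq_refl)) as A1.
      pose proof (H _ (or_intror (or_introl eq_refl))) as A2.
      pose proof (H _ (or_intror (or_intror (or_introl eq_refl)))) as A3.
      pose proof (H _ (or_intror (or_intror (or_intror (or_introl eq_refl))))) as A4.
      pose proof (H _ (or_intror (or_intror (or_intror (or_intror (or_introl eq_refl)))))) as A5.
      pose proof (H _ (or_intror (or_intror (or_intror (or_intror (or_intror (or_introl eq_refl))))))) as A6.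
      simpl in *. icases k; simpl; lra.
  - exists (l1*l1+h1*h1 + (l2*l2+h2*h2) + (l3*l3+h3*h3)). intros [[x1 x2] x3] Hb.
    pose proof (Hb 0%nat ltac:(lia)); pose proof (Hb 1%nat ltac:(lia));
    pose proof (Hb 2%nat ltac:(lia)); simpl in *. unfold norm2; simpl.
    assert (x1*x1 <= l1*l1+h1*h1) by (destruct (Rle_dec 0 x1); nra).
    assert (x2*x2 <= l2*l2+h2*h2) by (destruct (Rle_dec 0 x2); nra).
    assert (x3*x3 <= l3*l3+h3*h3) by (destruct (Rle_dec 0 x3); nra). lra.
  - exists ((l1+h1)/2, (l2+h2)/2, (l3+h3)/2), (1/2). split; [lra|].
    intros [[x1 x2] x3]; unfold ball, norm2; simpl; intros H k Hk.
    set (d1 := x1 - (l1+h1)/2) in *; set (d2 := x2 - (l2+h2)/2) in *; set (d3 := x3 - (l3+h3)/2) in *.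
    assert (d1*d1 < 1/2*(1/2)) by nra. assert (d2*d2 < 1/2*(1/2)) by nra.
    assert (d3*d3 < 1/2*(1/2)) by nra.
    assert (-(1/2) < d1 < 1/2) by (split; nra).
    assert (-(1/2) < d2 < 1/2) by (split; nra).
    assert (-(1/2) < d3 < 1/2) by (split; nra).
    unfold d1, d2, d3 in *. icases k; simpl; lra.
Qed.

Definition loA : R3 := (0,0,0).  Definition hiA : R3 := (1,1,3).
Definition loB : R3 := (0,2,0).  Definition hiB : R3 := (3,3,1).
Definition loC : R3 := (2,0,2).  Definition hiC : R3 := (3,3,3).
Definition loA' : R3 := (0,0,0). Definition hiA' : R3 := (1,3,1).
Definition loB' : R3 := (0,0,2). Definition hiB' : R3 := (3,1,3).
Definition loC' : R3 := (2,2,0). Definition hiC' : R3 := (3,3,3).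
Definition S1 : list region := [box loA hiA; box loB hiB; box loC hiC].
Definition S2 : list region := [box loA' hiA'; box loB' hiB'; box loC' hiC'].
Definition Mpn : list pn_marker := [
  ((0,(1/2),(1/2)), nvec 0 false);
  ((1,(1/2),(1/2)), nvec 0 true);
  (((1/2),0,(1/2)), nvec 1 false);
  (((1/2),1,(5/2)), nvec 1 true);
  (((1/2),(1/2),0), nvec 2 false);
  (((1/2),(1/2),3), nvec 2 true);
  ((0,(5/2),(1/2)), nvec 0 false);
  ((3,(5/2),(1/2)), nvec 0 true);
  (((5/2),2,(1/2)), nvec 1 false);
  (((1/2),3,(1/2)), nvec 1 true);
  (((1/2),(5/2),0), nvec 2 false);
  (((1/2),(5/2),1), nvec 2 true);
  ((2,(5/2),(5/2)), nvec 0 false);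
  ((3,(1/2),(5/2)), nvec 0 true);
  (((5/2),0,(5/2)), nvec 1 false);
  (((5/2),3,(5/2)), nvec 1 true);
  (((5/2),(1/2),2), nvec 2 false);
  (((5/2),(1/2),3), nvec 2 true);
  ((0,(1/2),(5/2)), nvec 0 false);
  (((1/2),0,(5/2)), nvec 1 false);
  (((5/2),3,(1/2)), nvec 1 true);
  (((5/2),(5/2),0), nvec 2 false);
  (((5/2),(5/2),3), nvec 2 true)].
Definition Mpp : list pp_marker := [
  ((0,(1/2),(1/2)), hplane 0 0);
  ((1,(1/2),(1/2)), hplane 0 1);
  (((1/2),0,(1/2)), hplane 1 0);
  (((1/2),1,(5/2)), hplane 1 1);
  (((1/2),(1/2),0), hplane 2 0);
  (((1/2),(1/2),3), hplane 2 3);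
  ((0,(5/2),(1/2)), hplane 0 0);
  ((3,(5/2),(1/2)), hplane 0 3);
  (((5/2),2,(1/2)), hplane 1 2);
  (((1/2),3,(1/2)), hplane 1 3);
  (((1/2),(5/2),0), hplane 2 0);
  (((1/2),(5/2),1), hplane 2 1);
  ((2,(5/2),(5/2)), hplane 0 2);
  ((3,(1/2),(5/2)), hplane 0 3);
  (((5/2),0,(5/2)), hplane 1 0);
  (((5/2),3,(5/2)), hplane 1 3);
  (((5/2),(1/2),2), hplane 2 2);
  (((5/2),(1/2),3), hplane 2 3);
  ((0,(1/2),(5/2)), hplane 0 0);
  (((1/2),0,(5/2)), hplane 1 0);
  (((5/2),3,(1/2)), hplane 1 3);
  (((5/2),(5/2),0), hplane 2 0);
  (((5/2),(5/2),3), hplane 2 3)].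

Ltac in_list := solve [simpl; repeat (first [left; reflexivity | right])].
Ltac good := let k := fresh in let Hk := fresh in intros k Hk; icases k; simpl; lra.
Ltac memb := unfold facet, box, bnd; simpl; split; [good | simpl; lra].

Ltac bx tac :=
  first [ tac loA hiA | tac loB hiB | tac loC hiC | tac loA' hiA' | tac loB' hiB' | tac loC' hiC' ].

Ltac pn1_with i s lo hi :=
  exists (box lo hi), (facet lo hi i s);
  split; [in_list | split; [apply facet_is_face; [unfold lo, hi; good | lia] |
     split; [unfold lo, hi; memb | apply outward; [lia | intro; reflexivity]]]].

Ltac pn1 := cbn [fst snd];
  match goal with |- exists P F, _ /\ _ /\ F ?p /\ outward_unit_normal P F (nvec ?i ?s) =>
    bx ltac:(pn1_with i s) end.

Ltac pp1_rest lo hi :=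
  split; [in_list | split; [apply facet_is_face; [unfold lo, hi; good | lia] |
     split; [unfold lo, hi; memb | eapply plane_lem; [lia | intro; reflexivity | unfold bnd, lo, hi; simpl; lra]]]].
Ltac pp1_with i lo hi :=
  first [ exists (box lo hi), (facet lo hi i true); pp1_rest lo hi
        | exists (box lo hi), (facet lo hi i false); pp1_rest lo hi ].

Ltac pp1 := cbn [fst snd];
  match goal with |- exists P F, _ /\ _ /\ F ?p /\ plane_of_face F (hplane ?i ?v) =>
    bx ltac:(pp1_with i) end.

Ltac pn2_one Heq :=
  cbn [fst snd]; split; [apply Heq; memb | apply outward; [lia | exact Heq]].
Ltac pp2_one Heq :=
  cbn [fst snd]; split; [apply Heq; memb | eapply plane_lem; [lia | exact Heq | unfold bnd; simpl; lra]].

Ltac part2 one :=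
  let P := fresh "P" in let F := fresh "F" in let HP := fresh in let HF := fresh in
  intros P F HP HF; simpl in HP;
  destruct HP as [<-|[<-|[<-|[]]]];
  (apply classify in HF; [|unfold loA, hiA, loB, hiB, loC, hiC, loA', hiA', loB', hiB', loC', hiC'; good]);
  let i := fresh "i" in let s := fresh "s" in let Hi := fresh in let Heq := fresh "Heq" in
  destruct HF as [i [s [Hi Heq]]]; icases i; destruct s;
  unfold loA, hiA, loB, hiB, loC, hiC, loA', hiA', loB', hiB', loC', hiC' in Heq;
  apply Exists_exists;
  repeat (first [apply Exists_cons_hd; solve [one Heq] | apply Exists_cons_tl]).

Lemma pn_S1 : pn_markup Mpn S1.
Proof.
  split.
  - intros m Hin. cbn [In Mpn Mpp] in Hin. repeat (destruct Hin as [<-|Hin]; [pn1|]). all: contradiction.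
  - part2 pn2_one.
Qed.

Lemma pn_S2 : pn_markup Mpn S2.
Proof.
  split.
  - intros m Hin. cbn [In Mpn Mpp] in Hin. repeat (destruct Hin as [<-|Hin]; [pn1|]). all: contradiction.
  - part2 pn2_one.
Qed.

Lemma pp_S1 : pp_markup Mpp S1.
Proof.
  split.
  - intros m Hin. cbn [In Mpn Mpp] in Hin. repeat (destruct Hin as [<-|Hin]; [pp1|]). all: contradiction.
  - part2 pp2_one.
Qed.

Lemma pp_S2 : pp_markup Mpp S2.
Proof.
  split.
  - intros m Hin. cbn [In Mpn Mpp] in Hin. repeat (destruct Hin as [<-|Hin]; [pp1|]). all: contradiction.
  - part2 pp2_one.
Qed.

Ltac disj_tac := 
  let x := fresh "x" in let H := fresh in let H1 := fresh in let H2 := fresh in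
  intros x [H1 H2];
  pose proof (H1 0%nat ltac:(lia)); pose proof (H1 1%nat ltac:(lia)); pose proof (H1 2%nat ltac:(lia));
  pose proof (H2 0%nat ltac:(lia)); pose proof (H2 1%nat ltac:(lia)); pose proof (H2 2%nat ltac:(lia));
  destruct x as [[x1 x2] x3]; simpl in *; lra.

Lemma valid1 : valid_scene S1.
Proof.
  split.
  - intros P HP; simpl in HP; destruct HP as [<-|[<-|[<-|[]]]]; apply box_convex; lra.
  - intros i j Hi Hj Hne; simpl in Hi, Hj; icases i; icases j; try lia; simpl;
    unfold loA, hiA, loB, hiB, loC, hiC; disj_tac.
Qed.

Lemma valid2 : valid_scene S2.
Proof.
  split.
  - intros P HP; simpl in HP; destruct HP as [<-|[<-|[<-|[]]]]; apply box_convex; lra.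
  - intros i j Hi Hj Hne; simpl in Hi, Hj; icases i; icases j; try lia; simpl;
    unfold loA', hiA', loB', hiB', loC', hiC'; disj_tac.
Qed.

Ltac refute Heq pt :=
  let H := fresh in let K := fresh in
  destruct (Heq pt) as [H _];
  assert (K : box loA hiA pt) by (unfold loA, hiA; good);
  apply H in K;
  unfold loA', hiA', loB', hiB', loC', hiC' in K;
  pose proof (K 0%nat ltac:(lia)); pose proof (K 1%nat ltac:(lia)); pose proof (K 2%nat ltac:(lia));
  simpl in *; lra.

Lemma differ : scenes_differ S1 S2.
Proof.
  left; exists (box loA hiA); split; [simpl; auto|].
  intros [Q [HQ Heq]]; simpl in HQ; destruct HQ as [<-|[<-|[<-|[]]]].
  - refute Heq (1/2, 1/2, 2).
  - refute Heq (1/2, 1/2, 1/2).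
  - refute Heq (1/2, 1/2, 1/2).
Qed.

Theorem mainTheorem4 :
  (exists (S S' : list region) (M : list pp_marker),
      valid_scene S /\ valid_scene S' /\ scenes_differ S S' /\
      pp_markup M S /\ pp_markup M S') /\
  (exists (S S' : list region) (M : list pn_marker),
      valid_scene S /\ valid_scene S' /\ scenes_differ S S' /\
      pn_markup M S /\ pn_markup M S').
Proof.
  split.
  - exists S1, S2, Mpp; exact (conj valid1 (conj valid2 (conj differ (conj pp_S1 pp_S2)))).
  - exists S1, S2, Mpn; exact (conj valid1 (conj valid2 (conj differ (conj pn_S1 pn_S2)))).
Qed.
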